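(* Let $\lambda>0$, $f:\mathbb{R}^n\to\mathbb{R}$ twice continuously differentiable, $\varphi=f+\lambda\|\cdot\|_1$, and $x^0$ with $\mathcal{L}_\varphi(x^0)$ bounded and $f$ twice uniformly Lipschitz continuously differentiable on an open neighborhood of it. Suppose that at iteration $k$ of PGN2CM (described in the context) a Newton-CG step is invoked and the Capped CG method returns $d_{\rm type}=\mathrm{NC}$. Then $j_k<+\infty$ and $$\varphi(x^k)-\varphi(x^{k+1})\ge c_{nc}\min\{\varepsilon_g\varepsilon_h,\varepsilon_h^3\},\qquad c_{nc}=\eta\theta^2\min\Big\{1,\frac{9(1-2\eta)^2}{L_H^2}\Big\}.$$
   Context: Constants: $L_g,L_H>0$ with, for $x,y\in\mathcal{L}_\varphi(x^0)=\{x:\varphi(x)\le\varphi(x^0)\}$, $\|\nabla^2f(x)\|\le L_g$ and $f(y)\le f(x)+\nabla f(x)^\top(y-x)+\frac12(y-x)^\top\nabla^2f(x)(y-x)+\frac{L_H}6\|y-x\|^3$. $\mathrm{sgn}(0)=1$. For $x$: $I^\varepsilon_0=\{i:|x_i|\le\varepsilon_g^{1/2}\}$, $I^\varepsilon_{\neq0}=\{i:|x_i|>\varepsilon_g^{1/2}\}$; $g^\varepsilon(x)_i=(\nabla f(x))_i+\lambda$ if $x_i>\varepsilon_g^{1/2}$, $(\nabla f(x))_i-\lambda$ if $x_i<-\varepsilon_g^{1/2}$, $(\nabla f(x))_i-\min\{\max\{-\lambda-\varepsilon_g^{3/4},(\nabla f(x))_i\},\lambda+\varepsilon_g^{3/4}\}$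 otherwise. Capped CG (inputs symmetric $H$, $g$, $\epsilon$, $\zeta\in(0,1)$, $\delta$, $\bar\tau$, $M\ge0$): $\bar H=H+\bar\tau\|g\|^\delta I$, $\kappa=\frac{M+\bar\tau\|g\|^\delta}\epsilon$, $\hat\zeta=\frac\zeta{3\kappa}$, $\tau=\frac{\sqrt\kappa}{\sqrt\kappa+1}$, $T=\frac{4\kappa^4}{(1-\sqrt\tau)^2}$, $y_0=0,r_0=g,p_0=-g$; if $p_0^\top\bar Hp_0<\epsilon\|p_0\|^2$ return $(p_0,\mathrm{NC})$; if $\|Hp_0\|>M\|p_0\|$ update $M=\|Hp_0\|/\|p_0\|$ and $\kappa,\hat\zeta,\tau,T$. Loop: $\alpha_j=\|r_j\|^2/p_j^\top\bar Hp_j$, $y_{j+1}=y_j+\alpha_jp_j$, $r_{j+1}=r_j+\alpha_j\bar Hp_j$, $\beta_{j+1}=\|r_{j+1}\|^2/\|r_j\|^2$, $p_{j+1}=-r_{j+1}+\beta_{j+1}p_j$, $j\leftarrow j+1$; update $M$ (and dependent quantities) whenever $\|Hv\|>M\|v\|$ for $v\in\{p_j,y_j,r_j\}$; then if $y_j^\top\bar Hy_j<\epsilon\|y_j\|^2$ return $(y_j,\mathrm{NC})$; elif $\|r_j\|\le\hat\zeta\|r_0\|$ return $(y_j,\mathrm{SOL})$; elif $p_j^\top\bar Hp_j<\epsilon\|p_j\|^2$ return $(p_j,\mathrm{NC})$; elif $\|r_j\|>\sqrt T\tau^{j/2}\|r_0\|$, compute $y_{j+1}$, find $i<j$ with $(y_{j+1}-y_i)^\top\bar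 H(y_{j+1}-y_i)<\epsilon\|y_{j+1}-y_i\|^2$ and return $(y_{j+1}-y_i,\mathrm{NC})$. Newton-CG step of PGN2CM (parameters $0<\varepsilon_g,\varepsilon_h<1$, $\delta\in[0,1]$, $\hat\tau\ge1$, $\zeta\in(0,1)$, $\eta\in(0,\frac{1-\zeta}2)$, $\theta\in(0,1)$), invoked at $x^k$ when [$I^\varepsilon_0(x^k)=\emptyset$ or $g^\varepsilon(x^k)$ vanishes on $I^\varepsilon_0(x^k)$], $I^\varepsilon_{\neq0}(x^k)\neq\emptyset$ and $\|g^\varepsilon(x^k)_{I^\varepsilon_{\neq0}(x^k)}\|>\varepsilon_g$: with $H^k_{\neq0\varepsilon}=(\nabla^2f(x^k))_{I^\varepsilon_{\neq0}(x^k)}$, $g^k_{\neq0\varepsilon}=g^\varepsilon(x^k)_{I^\varepsilon_{\neq0}(x^k)}$, $\tau_k\in[\frac{2\varepsilon_h}{\|g^k_{\neq0\varepsilon}\|^\delta},\frac{2\hat\tau\varepsilon_h}{\|g^k_{\neq0\varepsilon}\|^\delta}]$, call Capped CG$(H^k_{\neq0\varepsilon},g^k_{\neq0\varepsilon},\varepsilon_h,\zeta,\delta,\tau_k,M)$ to get $(d,d_{\rm type})$; set $d^k=0$ on $I^\varepsilon_0(x^k)$ and $d^k_{I^\varepsilon_{\neq0}(x^k)}=-\mathrm{sgn}(d^\top g^k_{\neq0\varepsilon})\frac{|d^\top H^k_{\neq0\varepsilon}d|}{\|d\|^2}\frac d{\|d\|}$ if $d_{\rm type}=\mathrm{NC}$,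 $=d$ if SOL; $x^{k+1}=x^k+\theta^{j_k}d^k$ with $j_k$ the smallest nonnegative integer $j$ such that $\varphi(x^k+\theta^jd^k)<\varphi(x^k)-\eta\theta^{2j}\varepsilon_h\|d^k\|^2$. The iterates lie in $\mathcal{L}_\varphi(x^0)$. *)

(* Defs.v *)
From HB Require Import structures.
From mathcomp Require Import all_boot all_order all_algebra.
From mathcomp Require Import all_classical all_reals all_analysis.
Set Implicit Arguments.
Unset Strict Implicit.
Unset Printing Implicit Defensive.
Import Order.TTheory GRing.Theory Num.Theory.
Import numFieldNormedType.Exports.
Local Open Scope ring_scope.

Definition dotv (R : realType) (m : nat) (u v : 'cV[R]_m) : R :=
  \sum_(i < m) u i ord0 * v i ord0.

Definition enorm (R : realType) (m : nat) (v : 'cV[R]_m) : R :=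
  Num.sqrt (dotv v v).

Definition l1norm (R : realType) (m : nat) (v : 'cV[R]_m) : R :=
  \sum_(i < m) `|v i ord0|.

Definition opnorm_le (R : realType) (m : nat) (A : 'M[R]_m) (c : R) : Prop :=
  forall v : 'cV[R]_m, enorm (A *m v) <= c * enorm v.

(* sgn with the convention sgn(0) = 1 *)
Definition sgn (R : realType) (a : R) : R := if 0 <= a then 1 else -1.

Definition subvec (R : realType) (n : nat) (I : {set 'I_n}) (v : 'cV[R]_n)
  : 'cV[R]_#|I| := \col_(k < #|I|) v (enum_val k) ord0.

Definition submx_sq (R : realType) (n : nat) (I : {set 'I_n}) (A : 'M[R]_n)
  : 'M[R]_#|I| := \matrix_(k < #|I|, l < #|I|) A (enum_val k) (enum_val l).

Definition evec (R : realType) (n : nat) (i : 'I_n) : 'cV[R]_n :=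
  delta_mx i ord0.

Definition grad (R : realType) (n : nat) (f : 'cV[R]_n -> R) (x : 'cV[R]_n)
  : 'cV[R]_n := \col_(i < n) derive f x (evec R i).

Definition hess (R : realType) (n : nat) (f : 'cV[R]_n -> R) (x : 'cV[R]_n)
  : 'M[R]_n :=
  \matrix_(i < n, j < n) derive (fun y => grad f y i ord0) x (evec R j).

Definition C2 (R : realType) (n : nat) (f : 'cV[R]_n -> R) : Prop :=
  [/\ forall x, differentiable f x,
      forall (i : 'I_n) x, differentiable (fun y => grad f y i ord0) x &
      forall i j : 'I_n, continuous (fun x => hess f x i j)].

(* Capped CG (relational semantics of one run of the algorithm).       *)

Inductive dtype := NC | SOL.

(* state after iteration j: y_0,...,y_j (in order), y_j, r_j, p_j, M *)
Record ccg_state (R : realType) (m : nat) := CCGState {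
  st_j : nat;
  st_ys : seq 'cV[R]_m;
  st_y : 'cV[R]_m;
  st_r : 'cV[R]_m;
  st_p : 'cV[R]_m;
  st_M : R }.

Section CappedCG.
Variables (R : realType) (m : nat) (H : 'M[R]_m) (g : 'cV[R]_m)
          (eps zeta delta taubar : R).

Definition ccg_shift : R := taubar * powR (enorm g) delta.
Definition ccg_Hbar : 'M[R]_m := H + (ccg_shift)%:M.
Definition ccg_kappa (M : R) : R := (M + ccg_shift) / eps.
Definition ccg_zetahat (M : R) : R := zeta / (3 * ccg_kappa M).
Definition ccg_tau (M : R) : R :=
  Num.sqrt (ccg_kappa M) / (Num.sqrt (ccg_kappa M) + 1).
Definition ccg_T (M : R) : R :=
  4 * ccg_kappa M ^+ 4 / (1 - Num.sqrt (ccg_tau M)) ^+ 2.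

Definition ccg_updM (M : R) (v : 'cV[R]_m) : R :=
  if M * enorm v < enorm (H *m v) then enorm (H *m v) / enorm v else M.

Definition ccg_nc (v : 'cV[R]_m) : Prop :=
  dotv v (ccg_Hbar *m v) < eps * enorm v ^+ 2.

Definition ccg_alpha (r p : 'cV[R]_m) : R :=
  enorm r ^+ 2 / dotv p (ccg_Hbar *m p).

Definition ccg_step (s : ccg_state R m) : ccg_state R m :=
  let a := ccg_alpha (st_r s) (st_p s) in
  let y' := st_y s + a *: st_p s in
  let r' := st_r s + a *: (ccg_Hbar *m st_p s) in
  let b := enorm r' ^+ 2 / enorm (st_r s) ^+ 2 in
  let p' := - r' + b *: st_p s in
  let M' := ccg_updM (ccg_updM (ccg_updM (st_M s) p') y') r' in
  CCGState (st_j s).+1 (rcons (st_ys s) y') y' r' p' M'.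

(* the "slow decrease" test ||r_j|| > sqrt(T) tau^{j/2} ||r_0||  (r_0 = g) *)
Definition ccg_slow (s : ccg_state R m) : Prop :=
  Num.sqrt (ccg_T (st_M s)) * Num.sqrt (ccg_tau (st_M s) ^+ st_j s) * enorm g
    < enorm (st_r s).

Definition ccg_small (s : ccg_state R m) : Prop :=
  enorm (st_r s) <= ccg_zetahat (st_M s) * enorm g.

(* ccg_run s d t : starting the loop in state s, the algorithm
   returns (d, t) *)
Inductive ccg_run : ccg_state R m -> 'cV[R]_m -> dtype -> Prop :=
| ccg_ret_y_nc s :
    ccg_nc (st_y (ccg_step s)) ->
    ccg_run s (st_y (ccg_step s)) NC
| ccg_ret_sol s :
    ~ ccg_nc (st_y (ccg_step s)) ->
    ccg_small (ccg_step s) ->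
    ccg_run s (st_y (ccg_step s)) SOL
| ccg_ret_p_nc s :
    ~ ccg_nc (st_y (ccg_step s)) ->
    ~ ccg_small (ccg_step s) ->
    ccg_nc (st_p (ccg_step s)) ->
    ccg_run s (st_p (ccg_step s)) NC
| ccg_ret_slow s (i : nat) :
    let s' := ccg_step s in
    let ynext := st_y s' + ccg_alpha (st_r s') (st_p s') *: st_p s' in
    ~ ccg_nc (st_y s') ->
    ~ ccg_small s' ->
    ~ ccg_nc (st_p s') ->
    ccg_slow s' ->
    (i < st_j s')%N ->
    ccg_nc (ynext - nth 0 (st_ys s') i) ->
    ccg_run s (ynext - nth 0 (st_ys s') i) NC
| ccg_continue s d t :
    ~ ccg_nc (st_y (ccg_step s)) ->
    ~ ccg_small (ccg_step s) ->
    ~ ccg_nc (st_p (ccg_step s)) ->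
    ~ ccg_slow (ccg_step s) ->
    ccg_run (ccg_step s) d t ->
    ccg_run s d t.

Definition capped_cg (M0 : R) (d : 'cV[R]_m) (t : dtype) : Prop :=
  (ccg_nc (- g) /\ d = - g /\ t = NC) \/
  (~ ccg_nc (- g) /\
   ccg_run (CCGState 0 [:: 0] 0 g (- g) (ccg_updM M0 (- g))) d t).

End CappedCG.

Definition phi (R : realType) (n : nat) (f : 'cV[R]_n -> R) (lam : R)
  (x : 'cV[R]_n) : R := f x + lam * l1norm x.

Definition levelset (R : realType) (n : nat) (f : 'cV[R]_n -> R) (lam : R)
  (x0 : 'cV[R]_n) : set 'cV[R]_n := [set x | phi f lam x <= phi f lam x0].

Definition I0eps (R : realType) (n : nat) (epsg : R) (x : 'cV[R]_n)
  : {set 'I_n} := [set i | `|x i ord0| <= Num.sqrt epsg].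

Definition Inz_eps (R : realType) (n : nat) (epsg : R) (x : 'cV[R]_n)
  : {set 'I_n} := [set i | Num.sqrt epsg < `|x i ord0|].

Definition geps (R : realType) (n : nat) (f : 'cV[R]_n -> R) (lam epsg : R)
  (x : 'cV[R]_n) : 'cV[R]_n :=
  \col_(i < n)
    let gi := grad f x i ord0 in
    if Num.sqrt epsg < x i ord0 then gi + lam
    else if x i ord0 < - Num.sqrt epsg then gi - lam
    else gi - Num.min (Num.max (- lam - powR epsg (3/4)) gi)
                      (lam + powR epsg (3/4)).

(* Main.v *)
Require Import Defs.
From HB Require Import structures.
From mathcomp Require Import all_boot all_order all_algebra.
From mathcomp Require Import all_classical all_reals all_analysis.
From mathcomp Require Import ring lra.
Import Order.TTheory GRing.Theory Num.Theory.
Import numFieldNormedType.Exports.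
Set Implicit Arguments.
Unset Strict Implicit.
Unset Printing Implicit Defensive.
Local Open Scope ring_scope.

Lemma dotvC (R : realType) m (u v : 'cV[R]_m) : dotv u v = dotv v u.
Proof. by rewrite /dotv; apply: eq_bigr => i _; rewrite mulrC. Qed.

Lemma dotvZr (R : realType) m (a : R) (u v : 'cV[R]_m) :
  dotv u (a *: v) = a * dotv u v.
Proof.
rewrite /dotv mulr_sumr; apply: eq_bigr => i _; rewrite mxE; ring.
Qed.

Lemma dotvZl (R : realType) m (a : R) (u v : 'cV[R]_m) :
  dotv (a *: u) v = a * dotv u v.
Proof. by rewrite dotvC dotvZr dotvC. Qed.

Lemma dotvDr (R : realType) m (u v w : 'cV[R]_m) :
  dotv u (v + w) = dotv u v + dotv u w.
Proof.
rewrite /dotv -big_split; apply: eq_bigr => i _; by rewrite mxE mulrDr.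
Qed.

Lemma dotv_ge0 (R : realType) m (v : 'cV[R]_m) : 0 <= dotv v v.
Proof. by rewrite /dotv; apply: sumr_ge0 => i _; rewrite -expr2 sqr_ge0. Qed.

Lemma enorm_ge0 (R : realType) m (v : 'cV[R]_m) : 0 <= enorm v.
Proof. exact: sqrtr_ge0. Qed.

Lemma enorm2 (R : realType) m (v : 'cV[R]_m) : enorm v ^+ 2 = dotv v v.
Proof. by rewrite /enorm sqr_sqrtr // dotv_ge0. Qed.

Lemma enormZ (R : realType) m (a : R) (v : 'cV[R]_m) :
  enorm (a *: v) = `|a| * enorm v.
Proof.
by rewrite /enorm dotvZl dotvZr mulrA -expr2 sqrtrM ?sqr_ge0 // sqrtr_sqr.
Qed.

Lemma coord_le (R : realType) m (v : 'cV[R]_m) i : `|v i ord0| <= enorm v.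
Proof.
rewrite -(@ler_pXn2r _ 2) ?nnegrE ?enorm_ge0 // enorm2 real_normK ?num_real //.
rewrite /dotv (bigD1 i) //= -expr2 lerDl; apply: sumr_ge0 => j _.
by rewrite -expr2 sqr_ge0.
Qed.

Lemma dotv_eq0 (R : realType) m (v : 'cV[R]_m) : dotv v v = 0 -> v = 0.
Proof.
move=> h; apply/matrixP => i j; rewrite (ord1 j) mxE.
have := coord_le v i; rewrite /enorm h sqrtr0.
by rewrite normr_le0 => /eqP.
Qed.

Lemma dotv0l (R : realType) m (v : 'cV[R]_m) : dotv 0 v = 0.
Proof. by rewrite /dotv big1 // => i _; rewrite mxE mul0r. Qed.

Lemma dotv_sub (R : realType) n (I : {set 'I_n}) (u v : 'cV[R]_n) :
  (forall i, i \notin I -> v i ord0 = 0) ->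
  dotv (subvec I u) (subvec I v) = dotv u v.
Proof.
move=> hv; rewrite /dotv (bigID (fun i => i \in I)) /=.
rewrite [X in _ + X]big1 ?addr0; last by move=> i /hv ->; rewrite mulr0.
rewrite (big_enum_val (fun x => u x ord0 * v x ord0)).
by apply: eq_bigr => k _; rewrite !mxE.
Qed.

Lemma submx_mul (R : realType) n (I : {set 'I_n}) (A : 'M[R]_n) (v : 'cV[R]_n) :
  (forall i, i \notin I -> v i ord0 = 0) ->
  submx_sq I A *m subvec I v = subvec I (A *m v).
Proof.
move=> hv; apply/matrixP => k j; rewrite (ord1 j) !mxE.
rewrite (bigID (fun i => i \in I)) /=.
rewrite [X in _ = _ + X]big1 ?addr0; last by move=> i /hv ->; rewrite mulr0.
rewrite (big_enum_val (fun x => A (enum_val k) x * v x ord0)).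
by apply: eq_bigr => l _; rewrite !mxE.
Qed.

Lemma col_decomp (R : realType) m (v : 'cV[R]_m) :
  v = \sum_(i < m) v i ord0 *: evec R i.
Proof.
rewrite {1}(matrix_sum_delta v); apply: eq_bigr => i _.
by rewrite big_ord1.
Qed.

Lemma dir_deriv (R : realType) m (g : 'cV[R]_m -> R) y v :
  differentiable g y -> 'D_v g y = dotv (grad g y) v.
Proof.
move=> dg; rewrite deriveE // {1}(col_decomp v) linear_sum /dotv.
apply: eq_bigr => i _; rewrite linearZ /= -deriveE // mxE mulrC.
by [].
Qed.

Lemma line_derive (R : realType) m (g : 'cV[R]_m -> R) x v t :
  derivable g (x + t *: v) v ->
  is_derive t 1 (fun s : R => g (x + s *: v)) ('D_v g (x + t *: v)).
Proof.
move=> dg.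
have E : (fun h : R => h^-1 *: (((fun s : R => g (x + s *: v)) \o shift t) (h *: 1)
             - (fun s : R => g (x + s *: v)) t)) =
         (fun h : R => h^-1 *: ((g \o shift (x + t *: v)) (h *: v) - g (x + t *: v))).
  apply/funext => h /=; congr (_ *: (g _ - _)).
  by rewrite [_%:A]mulr1 scalerDl addrCA.
apply: DeriveDef; first by rewrite /derivable E.
by rewrite /derive E.
Qed.

Lemma F_deriv (R : realType) m (f : 'cV[R]_m -> R) x v t :
  (forall y, differentiable f y) ->
  is_derive t (1:R) (fun s : R => f (x + s *: v)) (dotv (grad f (x + t *: v)) v).
Proof.
move=> df; rewrite -dir_deriv //; apply: line_derive; exact: diff_derivable.
Qed.

Lemma G_deriv (R : realType) m (f : 'cV[R]_m -> R) x v :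
  (forall i : 'I_m, differentiable (fun y => grad f y i ord0) x) ->
  is_derive (0:R) (1:R) (fun s : R => dotv (grad f (x + s *: v)) v)
    (dotv v (hess f x *m v)).
Proof.
move=> dg.
have E : (fun s : R => dotv (grad f (x + s *: v)) v) =
   \sum_(i < m) (fun s : R => v i ord0 * grad f (x + s *: v) i ord0).
  apply/funext => s; rewrite fct_sumE /dotv; apply: eq_bigr => i _.
  by rewrite mulrC.
rewrite E.
have -> : dotv v (hess f x *m v) =
  \sum_(i < m) v i ord0 * 'D_v (fun y => grad f y i ord0) x.
  rewrite /dotv; apply: eq_bigr => i _; congr (_ * _).
  rewrite dir_deriv // mxE /dotv; apply: eq_bigr => j _; rewrite !mxE.
  by [].
apply: is_derive_sum => i.
have Dx : derivable (fun y => grad f y i ord0) (x + 0 *: v) v.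
  by rewrite scale0r addr0; exact: diff_derivable.
have := is_deriveZ (v i ord0) (line_derive Dx).
by rewrite scale0r addr0.
Qed.

Lemma local_dec (R : realType) (k k' : R -> R) (b T : R) :
  (forall t : R, is_derive t (1:R) k (k' t)) -> k 0 = 0 -> k' 0 <= 0 ->
  is_derive (0:R) (1:R) k' b -> b < 0 -> 0 < T ->
  exists2 e, 0 < e < T & k e < 0.
Proof.
move=> hk k0 k'0 hk' b0 T0.
have hd : derivable k' 0 1 by case: hk'.
have hb : 'D_1 k' 0 = b by case: hk'.
have := @cvgr_lt R R _ _ _ ('D_1 k' 0) hd.
rewrite hb => /(_ _ 0 b0) H.
move: H => /nbhs_ballP [e e0 He].
have key : forall h, 0 < h < e -> k' h < 0.
  move=> h /andP[h0 he].
  have : ball (0:R) e h by rewrite /ball /= sub0r normrN gtr0_norm.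
  move/He => /(_ (lt0r_neq0 h0)) /=.
  rewrite addr0 [_%:A]mulr1 => H; have {H} : h^-1 * (k' h - k' 0) < 0 by [].
  rewrite pmulr_rlt0 ?invr_gt0 // subr_lt0 => H.
  by apply: lt_le_trans H k'0.
pose e1 := Num.min e T / 2.
have e10 : 0 < e1 by rewrite /e1 divr_gt0 // lt_min e0.
have e1e : e1 < Num.min e T.
  by rewrite /e1 ltr_pdivrMr // ltr_pMr ?ltr1n // lt_min e0.
exists e1; first by rewrite e10 /= (lt_le_trans e1e) // ge_min lexx orbT.
have [c /[1!in_itv] /= /andP[c0 c1] E] := MVT e10 (fun x _ => hk x)
   (derivable_within_continuous (fun x _ => @ex_derive _ _ _ _ _ _ _ (hk x))).
suff : k e1 - k 0 < 0 by rewrite k0 subr0.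
rewrite E subr0 pmulr_llt0 //; apply: key; rewrite c0 /=.
apply: (lt_trans c1); apply: lt_le_trans e1e _; rewrite ge_min lexx //.
Qed.

Lemma run_nc (R : realType) m (H : 'M[R]_m) g eps zeta delta taubar s d t :
  ccg_run H g eps zeta delta taubar s d t -> t = NC ->
  ccg_nc H g eps delta taubar d.
Proof. by elim=> //. Qed.

Lemma capped_nc (R : realType) m (H : 'M[R]_m) g eps zeta delta taubar M0 d :
  capped_cg H g eps zeta delta taubar M0 d NC ->
  ccg_nc H g eps delta taubar d.
Proof.
case=> [[h [-> _]] // | [_ hr]]; exact: run_nc hr _.
Qed.

Unset Implicit Arguments.

Theorem lemma9 (R : realType) (n : nat) (lam : R) (f : 'cV[R]_n -> R)
  (x0 : 'cV[R]_n)
  (* problem assumptions *)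
  (hlam : 0 < lam)
  (hf : C2 f)
  (hbnd : exists B : R, forall x, levelset f lam x0 x -> enorm x <= B)
  (hlip : exists (U : set 'cV[R]_n) (LU : R),
      [/\ open U, (levelset f lam x0 `<=` U)%classic &
          forall x y, U x -> U y ->
            opnorm_le (hess f x - hess f y) (LU * enorm (x - y))])
  (* the constants L_g, L_H *)
  (Lg LH : R) (hLg : 0 < Lg) (hLH : 0 < LH)
  (hLgb : forall x, levelset f lam x0 x -> opnorm_le (hess f x) Lg)
  (hLHb : forall x y, levelset f lam x0 x -> levelset f lam x0 y ->
      f y <= f x + dotv (grad f x) (y - x)
             + 2^-1 * dotv (y - x) (hess f x *m (y - x))
             + LH / 6 * enorm (y - x) ^+ 3)
  (* algorithm parameters *)
  (epsg epsh delta tauhat zeta eta theta : R)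
  (hepsg : 0 < epsg < 1) (hepsh : 0 < epsh < 1)
  (hdelta : 0 <= delta <= 1) (htauhat : 1 <= tauhat)
  (hzeta : 0 < zeta < 1) (heta : 0 < eta < (1 - zeta) / 2)
  (htheta : 0 < theta < 1)
  (* the current iterate x^k, which lies in the level set *)
  (xk : 'cV[R]_n) (hxk : levelset f lam x0 xk)
  (* the Newton-CG step is invoked at x^k *)
  (hinv0 : I0eps epsg xk = finset.set0 \/
           forall i, i \in I0eps epsg xk -> geps f lam epsg xk i ord0 = 0)
  (hinv1 : Inz_eps epsg xk != finset.set0)
  (hinv2 : epsg < enorm (subvec (Inz_eps epsg xk) (geps f lam epsg xk)))
  (* tau_k and the input M of Capped CG *)
  (tauk M : R)
  (htauk : 2 * epsh / powR (enorm (subvec (Inz_eps epsg xk)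
                                     (geps f lam epsg xk))) delta <= tauk
           <= 2 * tauhat * epsh / powR (enorm (subvec (Inz_eps epsg xk)
                                     (geps f lam epsg xk))) delta)
  (hM : 0 <= M)
  (* Capped CG returns d with d_type = NC *)
  (d : 'cV[R]_#|Inz_eps epsg xk|)
  (hccg : capped_cg (submx_sq (Inz_eps epsg xk) (hess f xk))
            (subvec (Inz_eps epsg xk) (geps f lam epsg xk))
            epsh zeta delta tauk M d NC)
  (* the direction d^k *)
  (dk : 'cV[R]_n)
  (hdk0 : forall i, i \in I0eps epsg xk -> dk i ord0 = 0)
  (hdk1 : subvec (Inz_eps epsg xk) dk =
          (- sgn (dotv d (subvec (Inz_eps epsg xk) (geps f lam epsg xk)))
           * (`|dotv d (submx_sq (Inz_eps epsg xk) (hess f xk) *m d)|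
              / enorm d ^+ 2) / enorm d) *: d) :
  let accept (j : nat) :=
    phi f lam (xk + theta ^+ j *: dk)
      < phi f lam xk - eta * theta ^+ (2 * j) * epsh * enorm dk ^+ 2 in
  let cnc := eta * theta ^+ 2 * Num.min 1 (9 * (1 - 2 * eta) ^+ 2 / LH ^+ 2) in
  (exists j, accept j) /\
  (forall jk : nat, accept jk -> (forall j, (j < jk)%N -> ~ accept j) ->
     cnc * Num.min (epsg * epsh) (epsh ^+ 3)
       <= phi f lam xk - phi f lam (xk + theta ^+ jk *: dk)).
Proof.
move=> accept cnc.
case: hf => hdf hdg _.
set I := Inz_eps epsg xk.
set gs := subvec I (geps f lam epsg xk).
set Hs := submx_sq I (hess f xk).
have heta2 : 0 < 1 - 2 * eta.
  case/andP: heta => _ h; case/andP: hzeta => h1 h2; lra.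
have hncd := capped_nc hccg.
have gs0 : 0 < enorm gs by apply: lt_trans hinv2; case/andP: hepsg.
have Pg0 : 0 < powR (enorm gs) delta by apply: powR_gt0.
set q := dotv d (Hs *m d).
set D := enorm d.
have hq : q < - epsh * D ^+ 2.
  move: hncd; rewrite /ccg_nc /ccg_Hbar mulmxDl mul_scalar_mx dotvDr dotvZr.
  rewrite -enorm2 -/q -/D => h.
  have hsh : 2 * epsh <= ccg_shift gs delta tauk.
    case/andP: htauk => h1 _; rewrite /ccg_shift.
    by rewrite -ler_pdivrMr // -/gs.
  have D2 : 0 <= D ^+ 2 by rewrite sqr_ge0.
  have : 2 * epsh * D ^+ 2 <= ccg_shift gs delta tauk * D ^+ 2 by rewrite ler_wpM2r.
  lra.
have hdkI : forall i, i \notin I -> dk i ord0 = 0.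
  move=> i; rewrite /I /Inz_eps inE -leNgt => h; apply: hdk0.
  by rewrite /I0eps inE.
have D0 : 0 < D.
  rewrite lt_neqAle enorm_ge0 andbT; apply/negP => /eqP D0.
  have : dotv d d = 0 by rewrite -enorm2 -/D -D0 expr0n.
  move/dotv_eq0 => d0; move: hq; rewrite /q d0 dotv0l -D0 expr0n mulr0.
  by rewrite ltxx.
set p := dotv d gs.
set a := `|q| / D ^+ 2 / D.
have a0 : 0 <= a by rewrite /a !divr_ge0 // ?sqr_ge0 // ltW.
have hsv : subvec I dk = (- sgn p * a) *: d.
  by rewrite hdk1 /a; congr (_ *: _); exact: esym (mulrA _ _ _).
have hsg : `|- sgn p| = 1 by rewrite /sgn; case: ifP; rewrite ?normrN normr1.
set N := enorm dk.
have hN : N = a * D.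
  rewrite /N /enorm -(dotv_sub dk hdkI) -/(enorm _) hsv enormZ normrM hsg.
  by rewrite mul1r ger0_norm.
have haq : `|q| = a * D ^+ 3.
  rewrite /a; field; by rewrite lt0r_neq0.
have qneg : q = - (a * D ^+ 3).
  rewrite -haq ltr0_norm ?opprK //; apply: (lt_le_trans hq).
  rewrite mulNr oppr_le0; apply: mulr_ge0; [case/andP: hepsh => /ltW //|].
  exact: sqr_ge0.
have hNe : epsh < N.
  have qlt0 : q < 0.
    apply: (lt_le_trans hq); rewrite mulNr oppr_le0; apply: mulr_ge0.
      by case/andP: hepsh => /ltW.
    exact: sqr_ge0.
  have h1 : epsh * D ^+ 2 < `|q|.
    by rewrite ltr0_norm // ltrNr -mulNr.
  have e3 : a * D ^+ 3 = (a * D) * D ^+ 2 by ring.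
  by rewrite hN; move: h1; rewrite haq e3 ltr_pM2r ?exprn_gt0.
have hvHv : dotv dk (hess f xk *m dk) = - N ^+ 3.
  rewrite dotvC -(dotv_sub (hess f xk *m dk) hdkI) -(submx_mul _ hdkI) -/Hs hsv.
  rewrite -scalemxAr dotvZl dotvZr dotvC -/q qneg hN /sgn.
  by case: ifP => _; ring.
pose s := \sum_(i < n) sgn (xk i ord0) * dk i ord0.
have hga : dotv (geps f lam epsg xk) dk = dotv (grad f xk) dk + lam * s.
  rewrite /dotv /s mulr_sumr -big_split; apply: eq_bigr => i _ /=.
  case: (boolP (i \in I)) => hi; last by rewrite hdkI // !mulr0 addr0.
  move: hi; rewrite inE => hi; rewrite !mxE /=.
  have sq0 : 0 <= Num.sqrt epsg by apply: sqrtr_ge0.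
  case: ifP => h1.
    have -> : sgn (xk i ord0) = 1 by rewrite /sgn ifT // ltW // (le_lt_trans sq0 h1).
    ring.
  case: ifP => h2.
    have -> : sgn (xk i ord0) = -1.
      by rewrite /sgn ifF //; apply/negbTE; rewrite -ltNge (lt_le_trans h2) // oppr_le0.
    ring.
  exfalso; move: hi; rewrite ltr_normr h1 /= ltrNr h2.
  by [].
have ha'0 : dotv (grad f xk) dk + lam * s <= 0.
  rewrite -hga -(dotv_sub (geps f lam epsg xk) hdkI) hsv dotvZr.
  rewrite dotvC -/p /sgn; case: ifP => hp; nra.
pose K := fun t : R => f (xk + t *: dk) - f xk + (lam * s) * t.
pose K' := fun t : R => dotv (grad f (xk + t *: dk)) dk + lam * s.
have hK : forall t : R, is_derive t (1:R) K (K' t).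
  move=> t.
  have E : K = (fun u : R => f (xk + u *: dk)) - cst (f xk) + (lam * s) \*: id.
    by apply/funext => u; rewrite /K /=.
  rewrite E; apply: is_derive_eq.
    apply: is_deriveD; apply: is_deriveB.
    all: try exact: (F_deriv xk dk t hdf).
    all: try exact: is_derive_cst.
  by rewrite /K' subr0 [_%:A]mulr1.
have hK' : is_derive (0:R) (1:R) K' (- N ^+ 3).
  have E : K' = (fun u : R => dotv (grad f (xk + u *: dk)) dk) + cst (lam * s).
    by apply/funext => u; rewrite /K' /=.
  rewrite E; apply: is_derive_eq.
    apply: is_deriveD.
    all: try exact: (G_deriv dk (hdg^~ xk)).
    all: try exact: is_derive_cst.
  by rewrite addr0 hvHv.
have K0 : K 0 = 0 by rewrite /K scale0r addr0 subrr mulr0 addr0.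
have K'0 : K' 0 <= 0 by rewrite /K' scale0r addr0.
have N0 : 0 < N by apply: lt_trans hNe; case/andP: hepsh.
have hphiK : forall t, 0 <= t -> t * N < Num.sqrt epsg ->
    phi f lam (xk + t *: dk) - phi f lam xk = K t.
  move=> t t0 tN.
  rewrite /phi; suff -> : l1norm (xk + t *: dk) = l1norm xk + s * t.
    by rewrite /K; ring.
  rewrite /l1norm /s mulr_suml -big_split; apply: eq_bigr => i _ /=.
  rewrite !mxE.
  case: (boolP (i \in I)) => hi; last by rewrite hdkI // !(mulr0, mul0r, addr0).
  move: hi; rewrite inE => hi.
  have hu : `|t * dk i ord0| < `|xk i ord0|.
    rewrite normrM ger0_norm //; apply: (le_lt_trans _ (lt_trans tN hi)).
    by rewrite ler_wpM2l // coord_le.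
  rewrite /sgn; case: ifP => hx.
    rewrite (ger0_norm hx) in hu; rewrite (ger0_norm hx) ger0_norm; first by ring.
    by move: hu; rewrite ltr_norml => /andP[h _]; lra.
  have hx' : xk i ord0 < 0 by rewrite ltNge hx.
  rewrite (ltr0_norm hx') in hu; rewrite (ltr0_norm hx') ltr0_norm; first by ring.
  by move: hu; rewrite ltr_norml => /andP[_ h]; lra.
pose T := Num.min (3 * (1 - 2 * eta) / LH) (Num.sqrt epsg / N).
have hT : forall t, t < T -> t * N < Num.sqrt epsg /\ LH * t < 3 * (1 - 2 * eta).
  move=> t; rewrite lt_min => /andP[h1 h2]; split.
    by rewrite -ltr_pdivlMr.
  by rewrite mulrC -ltr_pdivlMr.
have taylor : forall t, 0 < t < T ->
    phi f lam (xk + t *: dk) <= phi f lam x0 ->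
    K t < - (eta * t ^+ 2 * epsh * N ^+ 2).
  move=> t /andP[t0 tT] hl; have [tN tL] := hT t tT.
  have := hLHb xk (xk + t *: dk) hxk hl.
  have -> : xk + t *: dk - xk = t *: dk by rewrite addrAC subrr add0r.
  rewrite -scalemxAr dotvZr dotvZl dotvZr hvHv enormZ gtr0_norm // => h1.
  have h2 : t * (dotv (grad f xk) dk + lam * s) <= 0.
    by rewrite pmulr_rle0.
  have X0 : 0 < t ^+ 2 * N ^+ 3 by rewrite mulr_gt0 ?exprn_gt0.
  have h3 : t ^+ 2 * N ^+ 3 * (LH * t) < t ^+ 2 * N ^+ 3 * (3 * (1 - 2 * eta)).
    by rewrite ltr_pM2l.
  have h4 : eta * t ^+ 2 * epsh * N ^+ 2 <= eta * t ^+ 2 * N ^+ 2 * N.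
    have hp : 0 <= eta * t ^+ 2 * N ^+ 2.
      have eta0 : 0 <= eta by case/andP: heta => h _; lra.
      by rewrite mulr_ge0 ?sqr_ge0 // mulr_ge0 ?sqr_ge0.
    have := ler_wpM2l hp (ltW hNe).
    rewrite (_ : eta * t ^+ 2 * epsh * N ^+ 2 = eta * t ^+ 2 * N ^+ 2 * epsh);
      [by [] | ring].
  have e1 : 2^-1 * (t * (t * - N ^+ 3)) + LH / 6 * (t * N) ^+ 3 =
      t ^+ 2 * N ^+ 3 * (LH * t) / 6 - t ^+ 2 * N ^+ 3 / 2.
    by field.
  have e2 : eta * t ^+ 2 * N ^+ 2 * N = eta * (t ^+ 2 * N ^+ 3) by ring.
  have e3 : K t = f (xk + t *: dk) - f xk + lam * s * t by [].
  have e4 : t * (dotv (grad f xk) dk + lam * s) =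
            t * dotv (grad f xk) dk + lam * s * t by ring.
  move: h1; rewrite -addrA e1 => h1.
  rewrite e3; rewrite e2 in h4; rewrite e4 in h2.
  set X := t ^+ 2 * N ^+ 3 in X0 h3 h4 h1 *.
  nra.
have N3 : - N ^+ 3 < 0 by rewrite oppr_lt0 exprn_gt0.
have bnd0 : forall t, - (eta * t ^+ 2 * epsh * N ^+ 2) <= 0.
  move=> t; rewrite oppr_le0.
  have eta0 : 0 <= eta by case/andP: heta => h _; lra.
  have epsh0 : 0 <= epsh by case/andP: hepsh => h _; lra.
  by apply: mulr_ge0; [apply: mulr_ge0; [apply: mulr_ge0|]|]; rewrite ?sqr_ge0.
have key : forall t, 0 < t < T -> K t < - (eta * t ^+ 2 * epsh * N ^+ 2).
  move=> t /andP[t0 tT].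
  have [hl|hl] := boolP (phi f lam (xk + t *: dk) <= phi f lam x0).
    by apply: taylor => //; rewrite t0.
  exfalso.
  have Kt : 0 < K t.
    rewrite -hphiK ?ltW //; last by case: (hT t tT).
    rewrite subr_gt0; apply: le_lt_trans hxk _; by rewrite ltNge.
  have [e /andP[e0 et] Ke] := local_dec hK K0 K'0 hK' N3 t0.
  have hmm : Num.min (K e) (K t) <= 0 <= Num.max (K e) (K t).
    by rewrite ge_min le_max (ltW Ke) (ltW Kt) orbT.
  have [c /[1!in_itv] /= /andP[ec ct] Kc] := IVT (ltW et)
    (derivable_within_continuous (fun u _ => @ex_derive _ _ _ _ _ _ _ (hK u))) hmm.
  - have c0 : 0 < c by apply: lt_le_trans ec.
    have cT : c < T by apply: le_lt_trans tT.
    have hlc : phi f lam (xk + c *: dk) <= phi f lam x0.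
      have := hphiK c (ltW c0) (proj1 (hT c cT)); rewrite Kc => /eqP.
      by rewrite subr_eq0 => /eqP ->.
    have := taylor c (introT andP (conj c0 cT)) hlc; rewrite Kc => h.
    by have := lt_le_trans h (bnd0 c); rewrite ltxx.
have th0 : 0 < theta by case/andP: htheta.
have th1 : theta < 1 by case/andP: htheta.
have acc : forall j, theta ^+ j < T -> accept j.
  move=> j hj; rewrite /accept mulnC exprM.
  have tj0 : 0 < theta ^+ j by rewrite exprn_gt0.
  have := key _ (introT andP (conj tj0 hj)).
  rewrite -hphiK ?ltW //; last by case: (hT _ hj).
  rewrite -/N; lra.
have T0 : 0 < T.
  rewrite lt_min; apply/andP; split; apply: divr_gt0 => //; first by rewrite mulr_gt0.
  by rewrite sqrtr_gt0; case/andP: hepsg.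
split.
  have := @cvgr_lt R nat _ _ _ 0 (cvg_expr (_ : `|theta| < 1)).
  rewrite gtr0_norm // => /(_ _ th1 T T0) H.
  have [j hj] := filter_ex H.
  by exists j; apply: acc.
move=> jk hacc hmin.
have hdec : eta * theta ^+ (2 * jk) * epsh * N ^+ 2 <=
            phi f lam xk - phi f lam (xk + theta ^+ jk *: dk).
  by move: hacc; rewrite /accept -/N => h; lra.
apply: le_trans hdec.
have sq_mono : forall u w : R, 0 <= u -> u <= w -> u ^+ 2 <= w ^+ 2.
  by move=> u w u0 uw; rewrite !expr2 ler_pM.
have eta0 : 0 <= eta by case/andP: heta => h _; lra.
have epsh0 : 0 < epsh by case/andP: hepsh.
have epsg0 : 0 < epsg by case/andP: hepsg.
rewrite /cnc.
set m1 := Num.min 1 (9 * (1 - 2 * eta) ^+ 2 / LH ^+ 2).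
set m2 := Num.min (epsg * epsh) (epsh ^+ 3).
have m10 : 0 <= m1.
  rewrite /m1 le_min ler01 /= divr_ge0 ?sqr_ge0 // mulr_ge0 ?sqr_ge0 //.
have m11 : m1 <= 1 by rewrite /m1 ge_min lexx.
have m20 : 0 <= m2 by rewrite /m2 le_min !mulr_ge0 ?ltW ?exprn_gt0.
have m2a : m2 <= epsg * epsh by rewrite /m2 ge_min lexx.
have m2b : m2 <= epsh * N ^+ 2.
  apply: le_trans (_ : epsh ^+ 3 <= _); first by rewrite /m2 ge_min lexx orbT.
  by rewrite exprS; apply: ler_wpM2l; [exact: ltW | apply: sq_mono; exact: ltW].
have hN2 : 0 <= epsh * N ^+ 2 by rewrite mulr_ge0 ?sqr_ge0 ?ltW.
case: jk hacc hmin => [|j] hacc hmin.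
  have A : theta ^+ 2 * m1 <= 1.
    by apply: mulr_ile1 => //; [exact: exprn_ge0 (ltW th0) | apply: exprn_ile1; exact: ltW].
  have B : theta ^+ 2 * m1 * m2 <= epsh * N ^+ 2.
    by rewrite -[X in _ <= X]mul1r; apply: ler_pM => //; rewrite mulr_ge0 // exprn_ge0 // ltW.
  have -> : eta * theta ^+ 2 * m1 * m2 = eta * (theta ^+ 2 * m1 * m2) by ring.
  have -> : eta * theta ^+ (2 * 0) * epsh * N ^+ 2 = eta * (epsh * N ^+ 2).
    by rewrite muln0 expr0; ring.
  by rewrite ler_wpM2l.
have tT : T <= theta ^+ j.
  by rewrite leNgt; apply/negP => h; apply: (hmin j (ltnSn j)); exact: acc.
set t := theta ^+ j in tT *.
have t0 : 0 < t by rewrite exprn_gt0.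
suff C : m1 * m2 <= t ^+ 2 * (epsh * N ^+ 2).
  have -> : eta * theta ^+ 2 * m1 * m2 = eta * theta ^+ 2 * (m1 * m2) by ring.
  have -> : eta * theta ^+ (2 * j.+1) * epsh * N ^+ 2 =
            eta * theta ^+ 2 * (t ^+ 2 * (epsh * N ^+ 2)).
    by rewrite mulnC exprM (exprS theta j) /t; ring.
  by apply: ler_wpM2l => //; apply: mulr_ge0 => //; exact: exprn_ge0 (ltW th0).
move: tT; rewrite ge_min => /orP[h|h].
  have h1 : m1 <= t ^+ 2.
    apply: le_trans (_ : 9 * (1 - 2 * eta) ^+ 2 / LH ^+ 2 <= _).
      by rewrite /m1 ge_min lexx orbT.
    have -> : 9 * (1 - 2 * eta) ^+ 2 / LH ^+ 2 = (3 * (1 - 2 * eta) / LH) ^+ 2.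
      by field; rewrite lt0r_neq0.
    by apply: sq_mono => //; rewrite divr_ge0 ?mulr_ge0 ?ltW.
  by apply: ler_pM.
have h1 : epsg <= t ^+ 2 * N ^+ 2.
  rewrite -exprMn -(sqr_sqrtr (ltW epsg0)); apply: sq_mono; first exact: sqrtr_ge0.
  by rewrite -ler_pdivrMr.
have -> : t ^+ 2 * (epsh * N ^+ 2) = 1 * ((t ^+ 2 * N ^+ 2) * epsh) by ring.
apply: ler_pM => //; apply: le_trans m2a _.
by apply: ler_wpM2r => //; exact: ltW.
Qed.
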